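(* Let $\mathcal X$ be a Polish space with Borel $\sigma$-algebra and a $\sigma$-finite reference measure $\mathrm{d}x$, and let $\pi,\pi_Y$ be probability measures on $\mathcal X$ with densities (also denoted $\pi,\pi_Y$) such that $w=\pi/\pi_Y$ satisfies $|w|_\infty=\sup_{x}|w(x)|<\infty$. Let $\{Y_n\}_{n\ge 0}$ be any $\mathcal X$-valued stochastic process with $Y_0=y_0$, and for $n\ge1$ let $\hat\pi_{Y,n}=\frac1n\sum_{i=1}^n\delta_{Y_i}$ and \[ \hat\theta_n(\cdot)=\sum_{i=1}^n\frac{w(Y_i)}{\sum_{j=1}^n w(Y_j)}\delta_{Y_i}(\cdot),\qquad \eta_n(\cdot)=\mathbb E\,\hat\theta_n(\cdot). \] Then for all $n\ge1$, \[ \|\eta_n-\pi\|_{TV}\le B_n:=|w|_\infty\sup_{|f|\le1}\mathbb E\,\hat\pi_{Y,n}(\bar f)+2|w|_\infty^2\sup_{|f|\le1}\mathbb E\big(\hat\pi_{Y,n}(\bar f)\big)^2 . \]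
   Context: For a measurable $f:\mathcal X\to\mathbb R$, $\hat\pi_{Y,n}(\bar f):=\hat\pi_{Y,n}(f)-\pi_Y(f)$; suprema are over measurable $f$ with $|f|\le 1$. The total variation distance is $\|\mu-\nu\|_{TV}=\frac12\sup_{|f|\le1}|\mu(f)-\nu(f)|$. In the algorithm, $\eta_n$ is the conditional law of $X_{n+1}$ given that the resampling step is used at time $n+1$. *)

(* Defs.v *)
From mathcomp Require Import all_boot all_order all_algebra.
From mathcomp Require Import all_classical all_reals all_analysis.
Set Implicit Arguments. Unset Strict Implicit. Unset Printing Implicit Defensive.
Import Order.TTheory GRing.Theory Num.Theory numFieldNormedType.Exports.
Local Open Scope classical_set_scope.
Local Open Scope ring_scope.

Section Defs.
Context {d : measure_display} {X : measurableType d} {R : realType}.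

Definition test_fun (f : X -> R) : Prop :=
  measurable_fun setT f /\ forall x, `|f x| <= 1.

Definition supnorm (w : X -> R) : R := sup [set `|w x| | x in [set: X]].

Definition dens_int (mu : {measure set X -> \bar R}) (p f : X -> R) : R :=
  Rintegral mu setT (fun x => f x * p x).

Definition emp {Omega : Type} (Y : nat -> Omega -> X) (n : nat) (om : Omega)
  (f : X -> R) : R := n%:R^-1 * \sum_(1 <= i < n.+1) f (Y i om).

(* hat pi_{Y,n}(bar f) = hat pi_{Y,n}(f) - pi_Y(f) *)
Definition emp_c (mu : {measure set X -> \bar R}) (piY : X -> R)
  {Omega : Type} (Y : nat -> Omega -> X) (n : nat) (om : Omega) (f : X -> R) : R :=
  emp Y n om f - dens_int mu piY f.

(* hat theta_n(f) = sum_i w(Y_i)/(sum_j w(Y_j)) f(Y_i)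
   (with the MathComp convention x/0 = 0 if all weights vanish) *)
Definition thetahat (w : X -> R) {Omega : Type} (Y : nat -> Omega -> X)
  (n : nat) (om : Omega) (f : X -> R) : R :=
  \sum_(1 <= i < n.+1)
     (w (Y i om) / (\sum_(1 <= j < n.+1) w (Y j om))) * f (Y i om).

Definition Expect {dO : measure_display} {Omega : measurableType dO}
  (P : probability Omega R) (g : Omega -> R) : R := Rintegral P setT g.

Definition eta {dO : measure_display} {Omega : measurableType dO}
  (P : probability Omega R) (w : X -> R) (Y : nat -> Omega -> X) (n : nat)
  (f : X -> R) : R := Expect P (fun om => thetahat w Y n om f).

Definition tv_eta_pi {dO : measure_display} {Omega : measurableType dO}
  (P : probability Omega R) (mu : {measure set X -> \bar R}) (pi w : X -> R)
  (Y : nat -> Omega -> X) (n : nat) : R :=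
  2^-1 * sup [set `|eta P w Y n f - dens_int mu pi f| | f in test_fun].

Definition Bn {dO : measure_display} {Omega : measurableType dO}
  (P : probability Omega R) (mu : {measure set X -> \bar R}) (piY w : X -> R)
  (Y : nat -> Omega -> X) (n : nat) : R :=
  supnorm w * sup [set Expect P (fun om => emp_c mu piY Y n om f) | f in test_fun]
  + 2 * supnorm w ^+ 2 *
    sup [set Expect P (fun om => (emp_c mu piY Y n om f) ^+ 2) | f in test_fun].

End Defs.

(* Main.v *)
Require Import Defs.
From mathcomp Require Import all_boot all_order all_algebra.
From mathcomp Require Import all_classical all_reals all_analysis.
From mathcomp Require Import measurable_realfun.
From mathcomp Require Import ring lra.
Import Order.TTheory GRing.Theory Num.Theory numFieldNormedType.Exports.
Local Open Scope classical_set_scope.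
Local Open Scope ring_scope.
Section A.
Context {dO : measure_display} {Omega : measurableType dO} {R : realType}.
Variable P : probability Omega R.

Lemma bnd_int (g : Omega -> R) (c : R) : measurable_fun setT g ->
  (forall x, `|g x| <= c) -> P.-integrable setT (EFin \o g).
Proof.
move=> mg gc; apply: measurable_bounded_integrable => //.
  by apply: (@le_lt_trans _ _ 1%E); [apply: probability_le1|exact: ltry].
exists c; split; first by apply: num_real.
move=> M cM x _ /=; exact: le_trans (gc x) (ltW cM).
Qed.

Lemma Expect_le (g1 g2 : Omega -> R) c1 c2 : measurable_fun setT g1 ->
  measurable_fun setT g2 ->
  (forall x, `|g1 x| <= c1) -> (forall x, `|g2 x| <= c2) ->
  (forall x, g1 x <= g2 x) -> Expect P g1 <= Expect P g2.
Proof.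
move=> m1 m2 b1 b2 le12; apply: le_Rintegral => //.
- exact: bnd_int b1.
- exact: bnd_int b2.
Qed.

Lemma Expect_cst c : Expect P (fun=> c) = c.
Proof.
rewrite /Expect Rintegral_cst// (_ : fine _ = 1) ?mulr1 //.
exact: (congr1 fine (probability_setT P)).
Qed.

Lemma Expect_bnd (g : Omega -> R) c : measurable_fun setT g ->
  (forall x, `|g x| <= c) -> `|Expect P g| <= c.
Proof.
move=> mg gc; rewrite /Expect.
apply: le_trans (le_normr_Rintegral _ _) _ => //; first exact: bnd_int gc.
have := @le_Rintegral _ _ _ P setT (fun x => `|g x|) (fun=> c) measurableT.
rewrite (_ : Rintegral P setT (fun=> c) = c); last exact: Expect_cst.
apply => //.
- apply: (@bnd_int _ c); first exact: measurableT_comp.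
  by move=> x; rewrite normr_id.
- apply: (@bnd_int _ `|c|) => // x; exact: measurable_cst.
Qed.
End A.

Lemma bnd_of {T : Type} {R : realType} (h : T -> R) (c : R) :
  (forall x, `|h x| <= c) -> [bounded h x | x in [set: T]].
Proof.
move=> hc; exists c; split; first by apply: num_real.
move=> M cM x _ /=; exact: le_trans (hc x) (ltW cM).
Qed.

Section B.
Context {d : measure_display} {X : measurableType d} {R : realType}.
Variable mu : {measure set X -> \bar R}.
Variable p : X -> R.
Hypothesis mp : measurable_fun setT p.
Hypothesis p_ge0 : forall x, 0 <= p x.
Hypothesis p_prob : (\int[mu]_x (p x)%:E = 1)%E.

Lemma p_int : mu.-integrable setT (EFin \o p).
Proof.
apply/integrableP; split; first exact/measurable_EFinP.
rewrite (eq_integral (fun x => (p x)%:E)); first by rewrite p_prob ltry.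
by move=> x _ /=; rewrite ger0_norm.
Qed.

Lemma dens_integrable {h : X -> R} {c : R} : measurable_fun setT h ->
  (forall x, `|h x| <= c) -> mu.-integrable setT (EFin \o (fun x => h x * p x)).
Proof.
move=> mh hc.
have := integrableMr measurableT mh (bnd_of _ _ hc) p_int.
by apply: eq_integrable => // x _ /=; rewrite EFinM.
Qed.

Lemma dens_one : dens_int mu p (fun=> 1) = 1.
Proof.
rewrite /dens_int (@eq_Rintegral _ _ _ mu setT p); last by move=> x _; rewrite mul1r.
by rewrite /Rintegral p_prob.
Qed.

Lemma dens_Z (k : R) {h : X -> R} {c : R} : measurable_fun setT h ->
  (forall x, `|h x| <= c) ->
  dens_int mu p (fun x => k * h x) = k * dens_int mu p h.
Proof.
move=> mh hc; rewrite /dens_int -RintegralZl //; last exact: dens_integrable hc.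
by apply: eq_Rintegral => x _; rewrite mulrA.
Qed.

Lemma dens_bnd {h : X -> R} {c : R} : measurable_fun setT h ->
  (forall x, `|h x| <= c) -> `|dens_int mu p h| <= c.
Proof.
move=> mh hc; rewrite /dens_int.
apply: le_trans (le_normr_Rintegral _ _) _ => //; first exact: dens_integrable hc.
have -> : c = Rintegral mu setT (fun x => c * p x).
  rewrite RintegralZl //; last exact: p_int.
  by rewrite [Rintegral _ _ _]/Rintegral p_prob mulr1.
apply: le_Rintegral => //.
- have := integrable_norm (dens_integrable mh hc).
  by apply: eq_integrable.
- apply: (@dens_integrable (fun=> c) `|c|) => //; exact: measurable_cst.
- by move=> x _; rewrite normrM (ger0_norm (p_ge0 x)) ler_wpM2r.
Qed.
End B.

Lemma alg {R : realFieldType} (A D S : R) : A = D * S -> `|D| <= 2 ->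
  D <= A + A^+2/4 + 3*(1-S)^+2 /\ -D <= -A + A^+2/4 + 3*(1-S)^+2.
Proof.
move=> hA hD.
have e : D = A + A * (1 - S) + D * (1 - S)^+2 by rewrite hA; ring.
have h1 : 0 <= (A/2 - (1 - S))^+2 by apply: sqr_ge0.
have h2 : 0 <= (A/2 + (1 - S))^+2 by apply: sqr_ge0.
have h3 : 0 <= (2 - D) * (1-S)^+2.
  by apply: mulr_ge0; [rewrite subr_ge0; exact: le_trans (ler_norm _) hD| exact: sqr_ge0].
have h4 : 0 <= (2 + D) * (1-S)^+2.
  apply: mulr_ge0; last exact: sqr_ge0.
  by rewrite -lerBlDl sub0r; move: hD; rewrite ler_norml => /andP[].
split; nra.
Qed.

Section C.
Context {d : measure_display} {X : measurableType d} {R : realType}.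
Context {dO : measure_display} {Omega : measurableType dO}.
Variable (Y : nat -> Omega -> X) (mY : forall k, measurable_fun setT (Y k)).
Variable (n : nat) (hn : (1 <= n)%N).

Lemma emp_meas (h : X -> R) : measurable_fun setT h ->
  measurable_fun setT (fun om => emp Y n om h).
Proof.
move=> mh; rewrite /emp; apply: measurable_funM; first exact: measurable_cst.
by apply: measurable_sum => i; exact: measurableT_comp.
Qed.

Lemma emp_bnd (h : X -> R) (c : R) om : (forall x, `|h x| <= c) ->
  `|emp Y n om h| <= c.
Proof.
move=> hc; rewrite /emp normrM ger0_norm ?invr_ge0 //.
apply: le_trans (ler_wpM2l _ (ler_norm_sum _ _ _)) _; first by rewrite invr_ge0.
apply: le_trans (ler_wpM2l _ (ler_sum _ (fun i _ => hc (Y i om)))) _.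
  by rewrite invr_ge0.
rewrite sumr_const_nat subn1 /= -[c *+ n]mulr_natl mulKf //.
by rewrite pnatr_eq0 -lt0n.
Qed.

Lemma emp_Z (h : X -> R) k om : emp Y n om (fun x => k * h x) = k * emp Y n om h.
Proof. by rewrite /emp -mulr_sumr mulrCA. Qed.
End C.

Section BM.
Context {dO : measure_display} {Omega : measurableType dO} {R : realType}.
Variable P : probability Omega R.

Definition bndm (g : Omega -> R) :=
  measurable_fun setT g /\ exists c : R, forall x, `|g x| <= c.

Lemma bndm_add g1 g2 : bndm g1 -> bndm g2 -> bndm (fun x => g1 x + g2 x).
Proof.
move=> [m1 [c1 b1]] [m2 [c2 b2]]; split; first exact: measurable_funD.
exists (c1 + c2) => x; apply: le_trans (ler_normD _ _) _; exact: lerD.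
Qed.

Lemma bndm_mul g1 g2 : bndm g1 -> bndm g2 -> bndm (fun x => g1 x * g2 x).
Proof.
move=> [m1 [c1 b1]] [m2 [c2 b2]]; split; first exact: measurable_funM.
exists (c1 * c2) => x; rewrite normrM; apply: ler_pM => //.
Qed.

Lemma bndm_cst k : bndm (fun=> k).
Proof. by split; [exact: measurable_cst| exists `|k|]. Qed.

Lemma Expect_leB g1 g2 : bndm g1 -> bndm g2 -> (forall x, g1 x <= g2 x) ->
  Expect P g1 <= Expect P g2.
Proof. move=> [m1 [c1 b1]] [m2 [c2 b2]]; exact: Expect_le b1 b2. Qed.

Lemma Expect_D g1 g2 : bndm g1 -> bndm g2 ->
  Expect P (fun x => g1 x + g2 x) = Expect P g1 + Expect P g2.
Proof.
move=> [m1 [c1 b1]] [m2 [c2 b2]]; rewrite /Expect RintegralD //.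
- exact: bnd_int b1.
- exact: bnd_int b2.
Qed.

Lemma Expect_Z k g : bndm g -> Expect P (fun x => k * g x) = k * Expect P g.
Proof. move=> [m1 [c1 b1]]; rewrite /Expect RintegralZl //; exact: bnd_int b1. Qed.

Lemma Expect_Bc g k : bndm g -> Expect P (fun x => g x - k) = Expect P g - k.
Proof.
move=> hg; rewrite (@Expect_D g (fun=> - k) hg (bndm_cst (- k))).
by rewrite (_ : Expect P (fun=> - k) = - k) // Expect_cst.
Qed.
End BM.

Section D.
Context {d : measure_display} {X : measurableType d} {R : realType}.
Variable (mu : {measure set X -> \bar R}) (pi piY w : X -> R).
Hypotheses (mpi : measurable_fun setT pi) (mpiY : measurable_fun setT piY)
  (pi_ge0 : forall x, 0 <= pi x) (piY_ge0 : forall x, 0 <= piY x)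
  (pi_prob : (\int[mu]_x (pi x)%:E = 1)%E)
  (piY_prob : (\int[mu]_x (piY x)%:E = 1)%E)
  (mw : measurable_fun setT w) (w_ge0 : forall x, 0 <= w x)
  (w_ratio : forall x, pi x = w x * piY x).
Context {dO : measure_display} {Omega : measurableType dO}.
Variable (P : probability Omega R).
Variable (Y : nat -> Omega -> X) (mY : forall k, measurable_fun setT (Y k)).
Variable (n : nat) (hn : (1 <= n)%N).

Local Notation S1 := (sup [set Expect P (fun om => emp_c mu piY Y n om f) | f in test_fun]).
Local Notation Q := (sup [set Expect P (fun om => (emp_c mu piY Y n om f) ^+ 2) | f in test_fun]).

Lemma sq_bnd (x c : R) : `|x| <= c -> `|x ^+ 2| <= c ^+ 2.
Proof. move=> h; rewrite normrX; have := normr_ge0 x; nra. Qed.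

Lemma empc_bnd (h : X -> R) c om : measurable_fun setT h -> (forall x, `|h x| <= c) ->
  `|emp_c mu piY Y n om h| <= c + c.
Proof.
move=> mh hc; rewrite /emp_c; apply: le_trans (ler_normB _ _) _.
apply: lerD; first exact: (emp_bnd Y n hn h c om hc).
exact: (dens_bnd mu piY mpiY piY_ge0 piY_prob mh hc).
Qed.

Lemma empc_bndm (h : X -> R) c : measurable_fun setT h -> (forall x, `|h x| <= c) ->
  bndm (fun om => emp_c mu piY Y n om h).
Proof.
move=> mh hc; split.
  by apply: measurable_funB; [exact: (emp_meas Y mY n h mh) | exact: measurable_cst].
by exists (c + c) => om; apply: empc_bnd.
Qed.

Lemma sq_bndm (g : Omega -> R) : bndm g -> bndm (fun om => g om ^+ 2).
Proof. by move=> hg; have := bndm_mul g g hg hg; congr bndm; apply/funext => x; rewrite expr2. Qed.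

Lemma test_E1 h : test_fun h -> Expect P (fun om => emp_c mu piY Y n om h) <= S1.
Proof.
move=> th; apply: ub_le_sup; last by exists h.
exists (1 + 1) => _ [f [mf bf] <-].
have [m _] := empc_bndm f 1 mf bf.
apply: le_trans (ler_norm _) _; apply: (Expect_bnd P _ (1 + 1) m) => om.
exact: empc_bnd.
Qed.

Lemma test_E2 h : test_fun h -> Expect P (fun om => (emp_c mu piY Y n om h) ^+ 2) <= Q.
Proof.
move=> th; apply: ub_le_sup; last by exists h.
exists ((1 + 1) ^+ 2) => _ [f [mf bf] <-].
have [m _] := sq_bndm _ (empc_bndm f 1 mf bf).
apply: le_trans (ler_norm _) _; apply: (Expect_bnd P _ _ m) => om.
by apply: sq_bnd; exact: empc_bnd.
Qed.

Lemma empc_Z (h : X -> R) c k om : measurable_fun setT h -> (forall x, `|h x| <= c) ->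
  emp_c mu piY Y n om (fun x => k * h x) = k * emp_c mu piY Y n om h.
Proof.
move=> mh hc; rewrite /emp_c emp_Z (dens_Z mu piY mpiY piY_ge0 piY_prob k mh hc).
by rewrite mulrBr.
Qed.

Lemma scale_E (g : X -> R) (c : R) : measurable_fun setT g -> (forall x, `|g x| <= c) -> 0 < c ->
  `|Expect P (fun om => emp_c mu piY Y n om g)| <= c * S1 /\
  Expect P (fun om => (emp_c mu piY Y n om g) ^+ 2) <= c ^+ 2 * Q.
Proof.
move=> mg gc c0.
pose h := fun x => c^-1 * g x.
have mh : measurable_fun setT h by apply: measurable_funM => //; exact: measurable_cst.
have hb : forall x, `|h x| <= 1.
  move=> x; rewrite /h normrM ger0_norm ?invr_ge0 ?(ltW c0) //.
  rewrite -(mulVf (lt0r_neq0 c0)); apply: ler_wpM2l => //.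
  by rewrite invr_ge0 ltW.
have th : test_fun h by [].
have eg : g = (fun x => c * h x).
  by apply/funext => x; rewrite /h mulrA divff ?mul1r // lt0r_neq0.
have hm : measurable_fun setT (fun x => -1 * h x).
  by apply: measurable_funM => //; exact: measurable_cst.
have hmb : forall x, `|-1 * h x| <= 1 by move=> x; rewrite mulN1r normrN.
have Bh := empc_bndm h 1 mh hb.
rewrite eg; split.
  under eq_fun => om do rewrite (empc_Z h 1 c om mh hb).
  rewrite Expect_Z // normrM gtr0_norm //; apply: ler_wpM2l; first exact: ltW.
  rewrite ler_norml; apply/andP; split; last exact: test_E1.
  rewrite lerNl; have := test_E1 (fun x => -1 * h x) (conj hm hmb).
  under eq_fun => om do rewrite (empc_Z h 1 (-1) om mh hb).
  by rewrite Expect_Z // mulN1r.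
under eq_fun => om do rewrite (empc_Z h 1 c om mh hb) exprMn.
rewrite Expect_Z; last exact: sq_bndm.
by apply: ler_wpM2l; [exact: sqr_ge0 | exact: test_E2].
Qed.

Variable W : R.
Hypotheses (W_gt0 : 0 < W) (wW : forall x, `|w x| <= W).

Lemma main_f f : test_fun f ->
  `|eta P w Y n f - dens_int mu pi f| <= 2 * (W * S1 + 2 * W ^+ 2 * Q).
Proof.
move=> [mf bf].
set a := dens_int mu pi f.
have ha : `|a| <= 1 := dens_bnd mu pi mpi pi_ge0 pi_prob mf bf.
pose g := fun x => w x * (f x - a).
have mg : measurable_fun setT g.
  by apply: measurable_funM => //; apply: measurable_funB => //; exact: measurable_cst.
have gb : forall x, `|g x| <= W * 2.
  move=> x; rewrite /g normrM; apply: ler_pM => //.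
  by have := ler_normB (f x) a; have := bf x; lra.
have dw : dens_int mu piY w = 1.
  rewrite /dens_int (@eq_Rintegral _ _ _ mu setT pi); last by move=> x _; rewrite w_ratio.
  by rewrite /Rintegral pi_prob.
have dg : dens_int mu piY g = 0.
  rewrite /dens_int (@eq_Rintegral _ _ _ mu setT (fun x => f x * pi x - a * pi x)); last first.
    by move=> x _; rewrite /g w_ratio; ring.
  rewrite RintegralB //; last first.
  - exact: (@dens_integrable _ _ _ mu pi mpi pi_ge0 pi_prob (fun=> a) `|a| (measurable_cst _) (fun=> lexx _)).
  - exact: (dens_integrable mu pi mpi pi_ge0 pi_prob mf bf).
  rewrite RintegralZl //; last exact: p_int.
  have -> : Rintegral mu setT (fun x => pi x) = 1 by rewrite /Rintegral pi_prob.
  by rewrite mulr1 /a /dens_int subrr.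
have key : forall om,
  `|thetahat w Y n om f| <= 1 /\
  emp_c mu piY Y n om g = (thetahat w Y n om f - a) * emp Y n om w /\
  emp_c mu piY Y n om w = emp Y n om w - 1.
  move=> om.
  set s := \sum_(1 <= i < n.+1) w (Y i om).
  set t := \sum_(1 <= i < n.+1) w (Y i om) * f (Y i om).
  have hts : `|t| <= s.
    apply: le_trans (ler_norm_sum _ _ _) _; apply: ler_sum => i _.
    rewrite normrM (ger0_norm (w_ge0 _)) -[leRHS]mulr1; apply: ler_wpM2l => //.
  have s0 : 0 <= s by apply: sumr_ge0 => i _.
  have eth : thetahat w Y n om f = t / s.
    by rewrite /thetahat /t mulr_suml; apply: eq_bigr => i _; rewrite mulrAC.
  have eA : emp_c mu piY Y n om g = n%:R^-1 * (t - a * s).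
    rewrite /emp_c dg subr0 /emp /g; congr (_ * _).
    by rewrite /t /s mulr_sumr -sumrB; apply: eq_bigr => i _; ring.
  have ht1 : `|t / s| <= 1.
    have [s00|sne] := eqVneq s 0; first by rewrite s00 invr0 mulr0 normr0 ler01.
    have sp : 0 < s by rewrite lt_neqAle eq_sym sne s0.
    rewrite normrM (ger0_norm (ltW (_ : 0 < s^-1))) ?invr_gt0 //.
    by rewrite ler_pdivrMr ?mul1r.
  split; first by rewrite eth.
  split; last by rewrite /emp_c dw.
  rewrite eA eth /emp -/s.
  have [s00|sne] := eqVneq s 0.
    have t0 : t = 0 by apply/eqP; rewrite -normr_le0 -s00.
    by rewrite t0 s00; ring.
  by rewrite mulrCA mulrBl divfK.
have bth : bndm (fun om => thetahat w Y n om f).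
  split; last by exists 1 => om; have [] := key om.
  have -> : (fun om => thetahat w Y n om f) = (fun om =>
     (\sum_(1 <= i < n.+1) w (Y i om) * f (Y i om)) *
     powR (\sum_(1 <= i < n.+1) w (Y i om)) (-1)).
    apply/funext => om; rewrite powR_inv1; last by apply: sumr_ge0 => i _.
    by rewrite /thetahat mulr_suml; apply: eq_bigr => i _; rewrite mulrAC.
  apply: measurable_funM.
    apply: measurable_sum => i; apply: measurable_funM; exact: measurableT_comp.
  apply: (@measurableT_comp _ _ _ _ _ _ (@powR R ^~ (-1))) => //.
  apply: measurable_sum => i; exact: measurableT_comp.
have bA := empc_bndm g (W * 2) mg gb.
have bB := empc_bndm w W mw wW.
have bR2 : bndm (fun om => 4^-1 * (emp_c mu piY Y n om g) ^+ 2 +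
                             3 * (emp_c mu piY Y n om w) ^+ 2).
  apply: bndm_add; apply: bndm_mul; (try exact: bndm_cst); exact: sq_bndm.
have W2 : 0 < W * 2 by rewrite mulr_gt0.
have [hEA hEA2] := scale_E g (W * 2) mg gb W2.
have [_ hEB2] := scale_E w W mw wW W_gt0.
have ER2 : Expect P (fun om => 4^-1 * (emp_c mu piY Y n om g) ^+ 2 +
                             3 * (emp_c mu piY Y n om w) ^+ 2) =
   4^-1 * Expect P (fun om => (emp_c mu piY Y n om g) ^+ 2) +
   3 * Expect P (fun om => (emp_c mu piY Y n om w) ^+ 2).
  rewrite Expect_D; try (apply: bndm_mul; [exact: bndm_cst| exact: sq_bndm]).
  by rewrite !Expect_Z //; exact: sq_bndm.
have pw : forall om,
  thetahat w Y n om f - a <= emp_c mu piY Y n om g +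
     (4^-1 * (emp_c mu piY Y n om g) ^+ 2 + 3 * (emp_c mu piY Y n om w) ^+ 2) /\
  emp_c mu piY Y n om g + -1 *
     (4^-1 * (emp_c mu piY Y n om g) ^+ 2 + 3 * (emp_c mu piY Y n om w) ^+ 2)
   <= thetahat w Y n om f - a.
  move=> om; have [h1 [h2 h3]] := key om.
  have hD : `|thetahat w Y n om f - a| <= 2.
    by have := ler_normB (thetahat w Y n om f) a; lra.
  have [u1 u2] := alg _ _ _ h2 hD.
  have e2 : (1 - emp Y n om w) ^+ 2 = (emp_c mu piY Y n om w) ^+ 2.
    by rewrite h3; ring.
  rewrite e2 in u1 u2; split; lra.
have bD : bndm (fun om => thetahat w Y n om f - a).
  by apply: bndm_add => //; exact: bndm_cst.
have up := Expect_leB P _ _ bD (bndm_add _ _ bA bR2) (fun om => proj1 (pw om)).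
have lo := Expect_leB P _ _ (bndm_add _ _ bA (bndm_mul _ _ (bndm_cst (-1)) bR2)) bD
  (fun om => proj2 (pw om)).
rewrite (Expect_D P _ _ bA bR2) ER2 in up.
rewrite (Expect_D P _ _ bA (bndm_mul _ _ (bndm_cst (-1)) bR2)) (Expect_Z P (-1) _ bR2) ER2 in lo.
rewrite /eta -/(Expect P (fun om => thetahat w Y n om f)).
rewrite -(Expect_Bc P _ a bth).
move: hEA; rewrite ler_norml => /andP[hEA1 hEA2'].
rewrite ler_norml; apply/andP; split; nra.
Qed.

End D.

Theorem lemma1 (d : measure_display) (X : measurableType d) (R : realType)
  (mu : {measure set X -> \bar R}) (hmu : sigma_finite setT mu)
  (pi piY w : X -> R)
  (mpi : measurable_fun setT pi) (mpiY : measurable_fun setT piY)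
  (pi_ge0 : forall x, 0 <= pi x) (piY_ge0 : forall x, 0 <= piY x)
  (pi_prob : (\int[mu]_x (pi x)%:E = 1)%E)
  (piY_prob : (\int[mu]_x (piY x)%:E = 1)%E)
  (mw : measurable_fun setT w) (w_ge0 : forall x, 0 <= w x)
  (w_ratio : forall x, pi x = w x * piY x)
  (w_bounded : exists M : R, forall x, `|w x| <= M)
  (dO : measure_display) (Omega : measurableType dO) (P : probability Omega R)
  (Y : nat -> Omega -> X) (mY : forall k, measurable_fun setT (Y k))
  (y0 : X) (hY0 : forall om, Y 0%N om = y0)
  (n : nat) (hn : (1 <= n)%N) :
  tv_eta_pi P mu pi w Y n <= Bn P mu piY w Y n.
Proof.
have wW : forall x, `|w x| <= supnorm w.
  move=> x; apply: ub_le_sup; last by exists x.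
  by have [M hM] := w_bounded; exists M => _ [y _ <-].
have W_gt0 : 0 < supnorm w.
  rewrite ltNge; apply/negP => W0.
  have w0 : forall x, w x = 0.
    by move=> x; apply/eqP; rewrite -normr_le0; exact: le_trans (wW x) W0.
  have : (\int[mu]_x (pi x)%:E = \int[mu]_x (0:R)%:E)%E.
    by apply: eq_integral => x _; rewrite w_ratio w0 mul0r.
  by rewrite integral0 pi_prob => /eqP; rewrite onee_eq0.
rewrite /tv_eta_pi /Bn.
set B := (X in X <= _) in |- *.
have hs : sup [set `|eta P w Y n f - dens_int mu pi f| | f in test_fun] <=
   2 * (supnorm w *
     sup [set Expect P (fun om => emp_c mu piY Y n om f) | f in test_fun] +
     2 * supnorm w ^+ 2 *
     sup [set Expect P (fun om => (emp_c mu piY Y n om f) ^+ 2) | f in test_fun]).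
  apply: ge_sup.
    exists `|eta P w Y n (fun=> 0) - dens_int mu pi (fun=> 0)|, (fun=> 0) => //.
    by split; [exact: measurable_cst| move=> x; rewrite normr0 ler01].
  move=> _ [f tf <-].
  exact: (main_f mu pi piY w mpi mpiY pi_ge0 piY_ge0 pi_prob piY_prob mw w_ge0
    w_ratio P Y mY n hn (supnorm w) W_gt0 wW f tf).
rewrite /B; lra.
Qed.
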